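(* Let $f$ be a non-negative monotone submodular function on the ground set $[m]=\{1,\dots,m\}$ (identified with a function on $\{0,1\}^m$ via indicator vectors), and let $F$ be its multilinear extension. Let $\mathbf{x}\in[0,1]^m$ satisfy $\sum_{i=1}^m x_i\le 1$, and let $\mathbf{e}_i\in\{0,1\}^m$ denote the $i$-th standard unit vector. Then $F(\mathbf{x})\le\sum_{i=1}^m x_i f(\mathbf{e}_i)+\left(1-\sum_{i=1}^m x_i\right)f(\mathbf{0})$.
   Context: The multilinear extension of $f$ is $F(\mathbf{x})=\sum_{T\subseteq[m]}\prod_{k\in T}x_k\prod_{k\notin T}(1-x_k)f(T)$ for $\mathbf{x}\in[0,1]^m$. $f$ submodular means $f(A\cup B)+f(A\cap B)\le f(A)+f(B)$ for all $A,B\subseteq[m]$; monotone means $f(A)\le f(B)$ for $A\subseteq B$. *)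

(* Defs.v *)
(* Ground set [m] = 'I_m; subsets of [m] = {set 'I_m}
   (identified with indicator vectors in {0,1}^m). *)
From mathcomp Require Import all_boot all_order all_algebra.
Set Implicit Arguments. Unset Strict Implicit. Unset Printing Implicit Defensive.
Import Order.TTheory GRing.Theory Num.Theory.
Local Open Scope ring_scope.

Definition submodular (R : realFieldType) (m : nat) (f : {set 'I_m} -> R) :=
  forall A B : {set 'I_m}, f (A :|: B) + f (A :&: B) <= f A + f B.

Definition monotone (R : realFieldType) (m : nat) (f : {set 'I_m} -> R) :=
  forall A B : {set 'I_m}, A \subset B -> f A <= f B.

Definition nonnegative (R : realFieldType) (m : nat) (f : {set 'I_m} -> R) :=
  forall A : {set 'I_m}, 0 <= f A.

Definition multilinear_ext (R : realFieldType) (m : nat) (f : {set 'I_m} -> R)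
  (x : 'I_m -> R) : R :=
  \sum_(T : {set 'I_m})
     (\prod_(k in T) x k) * (\prod_(k in ~: T) (1 - x k)) * f T.

(* Main.v *)
Require Import Defs.
From mathcomp Require Import all_boot all_order all_algebra.
From mathcomp Require Import ring lra.
Import Order.TTheory GRing.Theory Num.Theory.
Local Open Scope ring_scope.

Lemma prod_if (R : comNzRingType) (m : nat) (F G : 'I_m -> R) (J : {set 'I_m}) :
  \prod_i (if i \in J then F i else G i) =
  (\prod_(i in J) F i) * (\prod_(i in ~: J) G i).
Proof.
rewrite (bigID (mem J)) /=; congr (_ * _).
  by apply: eq_big => // i ->.
by apply: eq_big => [i|i /negbTE ->]; rewrite ?in_setC.
Qed.

Lemma expand (R : comNzRingType) (m : nat) (F G : 'I_m -> R) :
  \prod_i (F i + G i) =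
  \sum_(J : {set 'I_m}) (\prod_(i in J) F i) * (\prod_(i in ~: J) G i).
Proof.
rewrite bigA_distr.
by apply: eq_big => // J _; rewrite prod_if.
Qed.

Lemma subadd (R : realFieldType) (m : nat) (f : {set 'I_m} -> R)
  (f_sub : submodular f) (T : {set 'I_m}) :
  f T <= f set0 + \sum_(k in T) (f [set k] - f set0).
Proof.
move: {2}#|T| (erefl #|T|) => n; elim: n T => [|n IH] T hT.
  by move/eqP: hT; rewrite cards_eq0 => /eqP ->; rewrite big_set0 addr0.
have: (0 < #|T|)%N by rewrite hT.
rewrite card_gt0 => /set0Pn [k kT].
have hT' : #|T :\ k| = n by move: hT; rewrite (cardsD1 k T) kT add1n => -[].
rewrite (bigD1 k) //=.
have := IH _ hT'.
have -> : \sum_(i in T :\ k) (f [set i] - f set0) =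
          \sum_(i in T | i != k) (f [set i] - f set0).
  by apply: eq_bigl => i; rewrite in_setD1 andbC.
have := f_sub [set k] (T :\ k).
rewrite setD1K //.
have -> : [set k] :&: (T :\ k) = set0.
  by apply/setP => i; rewrite !inE; case: eqP => // ->; rewrite eqxx.
move=> h1 h2; lra.
Qed.

Lemma psum1 (R : realFieldType) (m : nat) (x : 'I_m -> R) :
  \sum_(J : {set 'I_m}) (\prod_(i in J) x i) * (\prod_(i in ~: J) (1 - x i)) = 1.
Proof.
rewrite -expand; under eq_bigr => i _ do rewrite addrC subrK.
by rewrite big1.
Qed.

Lemma marg (R : realFieldType) (m : nat) (x : 'I_m -> R) (k : 'I_m) :
  \sum_(J : {set 'I_m}) (\prod_(i in J) x i) * (\prod_(i in ~: J) (1 - x i))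
     * (k \in J)%:R = x k.
Proof.
pose G i := if i == k then 0 else 1 - x i.
transitivity (\prod_i (x i + G i)); last first.
  rewrite (bigD1 k) //= /G eqxx addr0 big1 ?mulr1 // => i /negbTE ->.
  by rewrite addrC subrK.
rewrite expand; apply: eq_bigr => J _.
case: (boolP (k \in J)) => kJ.
  rewrite mulr1; congr (_ * _); apply: eq_bigr => i; rewrite in_setC /G.
  by case: eqP => // -> /negP.
rewrite mulr0 (bigD1 k (P := mem (~: J))) /=; last by rewrite in_setC.
by rewrite /G eqxx mul0r mulr0.
Qed.

Theorem lemma5 (R : realFieldType) (m : nat) (f : {set 'I_m} -> R)
  (f_nonneg : nonnegative f) (f_mono : monotone f) (f_sub : submodular f)
  (x : 'I_m -> R) (x_range : forall i, 0 <= x i <= 1)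
  (x_sum : \sum_(i < m) x i <= 1) :
  multilinear_ext f x <=
    \sum_(i < m) x i * f [set i] + (1 - \sum_(i < m) x i) * f set0.
Proof.
rewrite /multilinear_ext.
pose p (T : {set 'I_m}) := (\prod_(i in T) x i) * (\prod_(i in ~: T) (1 - x i)).
pose g k := f [set k] - f set0.
apply: (@le_trans _ _ (\sum_(T : {set 'I_m}) p T * (f set0 + \sum_(k in T) g k))).
  apply: ler_sum => T _; apply: ler_wpM2l; last exact: subadd.
  apply: mulr_ge0; apply: prodr_ge0 => i _; have /andP[h0 h1] := x_range i.
    by [].
  by rewrite subr_ge0.
have -> : \sum_(T : {set 'I_m}) p T * (f set0 + \sum_(k in T) g k)
   = f set0 * (\sum_(T : {set 'I_m}) p T) + \sum_k g k * x k.
  transitivity (\sum_(T : {set 'I_m}) (f set0 * p T +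
                   \sum_k g k * (p T * (k \in T)%:R))).
    apply: eq_bigr => T _; rewrite mulrDr mulrC; congr (_ + _).
    rewrite big_mkcond mulr_sumr; apply: eq_bigr => k _.
    by case: (k \in T); rewrite ?mulr0 ?mulr1 // mulrC.
  rewrite big_split /= -mulr_sumr; congr (_ + _).
  rewrite exchange_big /=; apply: eq_bigr => k _.
  by rewrite -mulr_sumr marg.
rewrite psum1 mulr1 /g.
under eq_bigr => k _ do rewrite mulrBl.
rewrite sumrB.
rewrite -mulr_sumr.
have -> : \sum_(i < m) f [set i] * x i = \sum_(i < m) x i * f [set i].
  by apply: eq_bigr => i _; rewrite mulrC.
rewrite le_eqVlt; apply/orP; left; apply/eqP; ring.
Qed.
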